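(* Let $X=A_1\oplus\cdots\oplus A_c=(V,E)$ be an additive product graph, let $p\ge 1$, and let $(\boldsymbol{\gamma},\boldsymbol{\beta})$ be any depth-$p$ ma-QAOA parameters with one angle $\gamma_{j,C}$ per layer $j\in[p]$ and edge category $C\in[c]$ and one angle $\beta_j$ per layer. Fix $C\in[c]$ and an edge $\{u,v\}$ of $\underline{A}_C$. Then the value $\langle\boldsymbol{\gamma},\boldsymbol{\beta}|Z_xZ_y|\boldsymbol{\gamma},\boldsymbol{\beta}\rangle$ is the same for every edge $\{x,y\}$ of $X$ of type $(C,\{u,v\})$, i.e. for all edges of the forms $\{v_1,v_1Cv\}$ (when $u=v_1$), $\{sCu,sCv\}$ (for any admissible string $s$), and $\{sC'w\,,\,sC'wCv\}$-type edges $\{s C' u, sC'uCv\}$ (for any admissible string $s$ and any $C'\neq C$). Consequently each edge $\{u,v\}$ of each $\underline{A}_C$ determines a single value, denoted $-\mathbb{E}[\underline{A}_C(u,v)]$ (so that $\mathbb{E}[\underline{A}_C(u,v)]=-\langle Z_xZ_y\rangle$ for any edge $\{x,y\}$ of type $(C,\{u,v\})$), and all such edges have isomorphic radius-$p$ neighborhoods in $X$ (isomorphic as category-labelled graphs).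
   Context: Additive product graph. Let $n,c\ge1$ and let $A_1,\dots,A_c$ be graphs (''plain atoms'') on the common vertex set $[n]=\{1,\dots,n\}$. Let $\underline{A}_j$ denote $A_j$ with its isolated vertices removed; assume each $\underline{A}_j$ is nonempty and connected and that the union graph $([n],E(A_1)\cup\cdots\cup E(A_c))$ is connected. Fix $v_1\in[n]$. The additive product graph $X=A_1\oplus\cdots\oplus A_c=(V,E)$ has as vertex set $V$ the set of strings $v_1C_1v_2C_2\cdots v_kC_kv_{k+1}$ ($k\ge0$) with each $v_i\in[n]$, each $C_i\in[c]$, $C_i\neq C_{i+1}$ for $i<k$, and $v_i,v_{i+1}$ both vertices of $\underline{A}_{C_i}$ for all $i\le k$. Its edge set $E$ consists of (all strings involved being required to lie in $V$, $s$ denoting a prefix string): (i) $\{sCu,sCv\}$ whenever $\{u,v\}$ is an edge of $\underline{A}_C$; (ii) $\{sC'u,\,sC'uCv\}$ whenever $\{u,v\}$ is an edge of $\underline{A}_{C}$ (with $C\ne C'$); (iii) $\{v_1,v_1Cv\}$ whenever $\{v_1,v\}$ is an edge of $\underline{A}_C$. An edge of $X$ produced in (i), (ii) or (iii) from the edge $\{u,v\}$ of $\underline{A}_C$ (with $u=v_1$ in (iii)) is said to be of type $(C,\{u,v\})$ and of category $C$. ma-QAOA on $X$. Parameters: $\gamma_{j,C}\in[0,2\pi]$ for $j\in[p]$, $C\in[c]$, and $\beta_j\in[0,2\pi]$ for $j\in[p]$. For a finite graph $H$ whose edges carry categories $c(e)\in[c]$, the ma-QAOA state is $|\boldsymbol{\gamma},\boldsymbol{\beta}\rangle=e^{-i\beta_pB}e^{-iC_{p}}\cdots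 e^{-i\beta_1B}e^{-iC_{1}}|+\rangle^{\otimes V(H)}$, where $B=\sum_{v}X_v$ and $C_j=-\sum_{\{u,v\}\in E(H)}\gamma_{j,c(\{u,v\})}Z_uZ_v$ ($X_v,Z_v$ Pauli operators on qubit $v$). For an edge $\{x,y\}$ of the infinite graph $X$, $\langle\boldsymbol{\gamma},\boldsymbol{\beta}|Z_xZ_y|\boldsymbol{\gamma},\boldsymbol{\beta}\rangle$ is defined as this expectation computed on the finite subgraph of $X$ induced by the vertices at graph distance at most $p$ from $\{x,y\}$ (with inherited categories). Standard QAOA is the special case $\gamma_{j,1}=\cdots=\gamma_{j,c}$ for all $j$. *)

(* Defs.v *)
From mathcomp Require Import all_boot all_order all_algebra.
From mathcomp Require Import reals trigo.
From mathcomp Require Import complex.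
Import GRing.Theory Num.Theory.

Set Implicit Arguments.
Unset Strict Implicit.
Unset Printing Implicit Defensive.

(* Vertices of [n] are 'I_n (0-based), categories [c] are 'I_c.       *)
(* A string v1 C1 v2 C2 ... vk Ck v(k+1) is encoded by the list        *)
(*   [:: (Ck, v(k+1)); ...; (C2, v3); (C1, v2)]                        *)
(* (most recent letter first); the leading v1 is implicit.             *)
(* So  s C u  (string s extended by C u)  is  (C, u) :: s.             *)

Section AdditiveProduct.

Variables (n c : nat) (A : 'I_c -> rel 'I_n) (v1 : 'I_n).

Definition str := seq ('I_c * 'I_n).

(* w is a vertex of underline(A_C), i.e. non-isolated in A_C *)
Definition in_under (C : 'I_c) (w : 'I_n) : bool := [exists w', A C w w'].

Definition lastv (s : str) : 'I_n := if s is (_, w) :: _ then w else v1.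

Fixpoint validstr (s : str) : bool :=
  match s with
  | [::] => true
  | (C, w) :: t =>
      [&& validstr t,
          in_under C (lastv t), in_under C w,
          w != lastv t &
          (if t is (C', _) :: _ then C != C' else true)]
  end.

(* edges of X produced from the edge {u,v} of A_C, with x, y in this order *)
Definition typed_i (C : 'I_c) (u v : 'I_n) (x y : str) : bool :=
  (x == (C, u) :: behead x) && (y == (C, v) :: behead x).
Definition typed_ii (C : 'I_c) (u v : 'I_n) (x y : str) : bool :=
  [exists C' : 'I_c, [&& C' != C, x == (C', u) :: behead x & y == (C, v) :: x]].
Definition typed_iii (C : 'I_c) (u v : 'I_n) (x y : str) : bool :=
  [&& u == v1, x == [::] & y == [:: (C, v)]].
Definition typed (C : 'I_c) (u v : 'I_n) (x y : str) : bool :=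
  [|| typed_i C u v x y, typed_ii C u v x y | typed_iii C u v x y].

Definition edge_from (C : 'I_c) (u v : 'I_n) (x y : str) : bool :=
  [&& validstr x, validstr y, A C u v & typed C u v x y || typed C u v y x].

Definition has_type (C : 'I_c) (u v : 'I_n) (x y : str) : bool :=
  edge_from C u v x y || edge_from C v u x y.

Definition adjC (C : 'I_c) (x y : str) : bool :=
  [exists u : 'I_n, exists v : 'I_n, has_type C u v x y].

Definition adjX (x y : str) : bool := [exists C : 'I_c, adjC C x y].

(* every neighbour of r in X is a child, a sibling or the parent of r;
   neighbours r is the (finite) list of neighbours of r in X *)
Definition candidates (r : str) : seq str :=
  [seq a :: r | a : 'I_c * 'I_n] ++
  (if r is a :: s then s :: [seq (a.1, w) :: s | w : 'I_n] else [::]).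
Definition neighbours (r : str) : seq str := [seq z <- candidates r | adjX r z].

Definition ball_step (S : seq str) : seq str :=
  undup (S ++ flatten (map neighbours S)).
Definition ball (k : nat) (x y : str) : seq str :=
  iter k ball_step (undup [:: x; y]).

Definition nbhd_iso (B B' : seq str) (x y x' y' : str) : Prop :=
  exists f : str -> str,
    [/\ {in B &, injective f}, perm_eq (map f B) B',
        {in B &, forall a b, forall C, adjC C (f a) (f b) = adjC C a b} &
        (f x = x' /\ f y = y') \/ (f x = y' /\ f y = x')].

End AdditiveProduct.

(* ma-QAOA on a finite graph with vertex set 'I_N and category-C edge  *)
(* relation E C (each edge {i,k}, i<k, listed once).                   *)
(* Basis states: z : {ffun 'I_N -> bool}; Z_i z = (-1)^(z i).          *)

Section MaQAOA.

Local Open Scope ring_scope.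
Variables (R : realType) (c p N : nat).
Variable E : 'I_c -> 'I_N -> 'I_N -> bool.
Variables (gamma : 'I_p -> 'I_c -> R) (beta : 'I_p -> R).

Definition spin (b : bool) : R := if b then -1 else 1.

Definition state := {ffun {ffun 'I_N -> bool} -> R[i]}.

(* eigenvalue of C_j = - sum_{edges} gamma_{j,c(e)} Z_u Z_v on z *)
Definition costval (j : 'I_p) (z : {ffun 'I_N -> bool}) : R :=
  - \sum_(C < c) \sum_(i < N) \sum_(k < N | (i < k)%N)
      (E C i k)%:R * gamma j C * spin (z i) * spin (z k).

(* e^{-i C_j} (diagonal) *)
Definition phase_op (j : 'I_p) (psi : state) : state :=
  [ffun z : {ffun 'I_N -> bool} => Complex (cos (costval j z)) (- sin (costval j z)) * psi z].

(* e^{-i beta B} = tensor product over qubits of (cos beta I - i sin beta X) *)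
Definition mixer_op (j : 'I_p) (psi : state) : state :=
  [ffun z : {ffun 'I_N -> bool} => \sum_(z' : {ffun 'I_N -> bool})
     (\prod_(i < N) (if z i == z' i then Complex (cos (beta j)) 0
                     else Complex 0 (- sin (beta j)))) * psi z'].

Definition plus_state : state :=
  [ffun => Complex ((Num.sqrt (2 : R))^-1 ^+ N) 0].

(* |gamma,beta> = e^{-i b_p B} e^{-i C_p} ... e^{-i b_1 B} e^{-i C_1} |+> *)
Definition qaoa_state : state :=
  foldl (fun psi j => mixer_op j (phase_op j psi)) plus_state (enum 'I_p).

Definition bit (z : {ffun 'I_N -> bool}) (k : nat) : bool :=
  [exists i : 'I_N, (val i == k) && z i].

Definition ZZ_expect (i k : nat) : R :=
  \sum_(z : {ffun 'I_N -> bool})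
     (let: Complex a b := qaoa_state z in a ^+ 2 + b ^+ 2)
       * spin (bit z i) * spin (bit z k).

End MaQAOA.

(* <gamma,beta| Z_x Z_y |gamma,beta> for an edge {x,y} of X, computed on the
   subgraph of X induced by the vertices at distance <= p from {x,y} *)
Definition X_ZZ (R : realType) (n c : nat) (A : 'I_c -> rel 'I_n) (v1 : 'I_n)
    (p : nat) (gamma : 'I_p -> 'I_c -> R) (beta : 'I_p -> R) (x y : str n c) : R :=
  let B := ball A v1 p x y in
  let E := fun (C : 'I_c) (i k : 'I_(size B)) =>
             adjC A v1 C (nth [::] B i) (nth [::] B k) in
  ZZ_expect E gamma beta (index x B) (index y B).

(* Main.v *)
Require Import Defs.
From mathcomp Require Import all_boot all_order all_algebra all_fingroup.
From mathcomp Require Import reals trigo.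
From mathcomp Require Import complex.
Import GRing.Theory Num.Theory.
Set Implicit Arguments. Unset Strict Implicit. Unset Printing Implicit Defensive.

Section G.
Variables (n c : nat) (A : 'I_c -> rel 'I_n).
Hypothesis A_sym : forall C : 'I_c, symmetric (A C).
Hypothesis A_irr : forall C : 'I_c, irreflexive (A C).
Local Notation str := (str n c).

Definition ca (r : 'I_n) (C : 'I_c) (x y : str) : bool :=
  (match x, y with
   | (C1, a) :: t, (C2, b) :: t2 => [&& C1 == C, C2 == C, t2 == t & A C a b]
   | _, _ => false end)
  || (match y with (C2, b) :: t2 => [&& C2 == C, t2 == x & A C (lastv r x) b]
      | _ => false end).

Lemma edge_from_ca r C u v x y :
  edge_from A r C u v x y -> ca r C x y || ca r C y x.
Proof.
case/and4P=> Vx Vy Auv /orP[] /or3P[].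
- case/andP=> /eqP ex /eqP ey; rewrite ex ey /ca /= !eqxx Auv //.
- case/existsP=> C' /and3P[_ /eqP ex /eqP ey]; rewrite ey /ca /=.
  by rewrite ex /= !eqxx Auv ?orbT.
- case/and3P=> /eqP eu /eqP ex /eqP ey; rewrite ex ey /ca /= eqxx -eu Auv.
  by rewrite ?orbT.
- case/andP=> /eqP ey /eqP ex; rewrite ex ey /ca /= !eqxx Auv /= ?orbT //.
- case/existsP=> C' /and3P[_ /eqP ey /eqP ex]; rewrite ex /ca /=.
  by rewrite ey /= !eqxx Auv ?orbT.
- case/and3P=> /eqP eu /eqP ey /eqP ex; rewrite ex ey /ca /= eqxx -eu Auv.
  by rewrite ?orbT.
Qed.

Lemma adjCE r C x y :
  adjC A r C x y = [&& validstr A r x, validstr A r y & ca r C x y || ca r C y x].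
Proof.
apply/idP/idP.
  case/existsP=> u /existsP[v] /orP[] He;
  by rewrite (edge_from_ca He); case/and4P: He => -> -> _ _.
case/and3P=> Vx Vy Hca.
have key : forall x y, validstr A r x -> validstr A r y -> ca r C x y ->
   exists u v, edge_from A r C u v x y.
  clear Vx Vy Hca x y => x y Vx Vy /orP[].
    case: x Vx => [|[C1 a] t] // Vx; case: y Vy => [|[C2 b] t2] // Vy.
    case/and4P=> /eqP e1 /eqP e2 /eqP et Aab; subst.
    exists a, b; rewrite /edge_from Vx Vy Aab /typed /typed_i /= !eqxx //.
  case: y Vy => [|[C2 b] t2] // Vy /and3P[/eqP e2 /eqP et Ab]; subst.
  case: x Vx Vy Ab => [|[C1 a] t] Vx Vy Ab.
    exists r, b; rewrite /edge_from Vx Vy Ab /typed /typed_iii !eqxx ?orbT //.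
  exists a, b; rewrite /edge_from Vx Vy Ab /typed; apply/orP; left.
  apply/or3P; apply: Or32; apply/existsP; exists C1.
  move: Vy => /= /and5P[_ _ _ _ hC]; rewrite eq_sym hC /= !eqxx //.
case/orP: Hca => H.
  have [u [v He]] := key _ _ Vx Vy H.
  by apply/existsP; exists u; apply/existsP; exists v; rewrite /has_type He.
have [u [v He]] := key _ _ Vy Vx H.
apply/existsP; exists u; apply/existsP; exists v.
move: He; rewrite /edge_from => /and4P[_ _ Auv Ht].
by rewrite orbC in Ht; rewrite /has_type /edge_from Vx Vy Auv Ht.
Qed.


Fixpoint psi (D : 'I_c) (r w : 'I_n) (s : str) : str :=
  match s with
  | [::] => [:: (D, r)]
  | (C, a) :: t => if nilp t && (C == D) then (if a == w then [::] else [:: (C, a)])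
                   else (C, a) :: psi D r w t
  end.

Lemma psi_lastv D r w s : lastv w (psi D r w s) = lastv r s.
Proof.
case: s => [|[C a] t] //=; case: ifP => // _; case: ifP => //= /eqP -> //.
Qed.

Lemma psi_app D r w s : psi D r w (s ++ [:: (D, w)]) = s.
Proof.
elim: s => [|[C a] s IH] /=; first by rewrite !eqxx.
case: s IH => [|x s] IH /=; first by rewrite !eqxx.
by rewrite -[in RHS]IH.
Qed.

Lemma validE r C a t : validstr A r ((C, a) :: t) =
  [&& validstr A r t, in_under A C (lastv r t), in_under A C a, a != lastv r t &
      (if t is (C', _) :: _ then C != C' else true)].
Proof. by []. Qed.

Lemma psi_cons2 D r w x C a t : psi D r w ((C,a)::x::t) = (C,a) :: psi D r w (x::t).
Proof. by []. Qed.

Lemma psi_hd D r w C a t :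
  if psi D r w ((C,a)::t) is (C'',_)::_ then C'' == C else true.
Proof.
case: t => [|x t] /=; last by rewrite eqxx.
by case: ifP => _; [case: ifP => _ /= | ]; rewrite /= ?eqxx.
Qed.

Lemma psi_consE D r w C a t : ~~ (nilp t && (C == D)) ->
  psi D r w ((C, a) :: t) = (C, a) :: psi D r w t.
Proof. by move=> h; rewrite /= (negbTE h). Qed.

Lemma psi_ca D r w C x y : ca r C x y ->
  ca w C (psi D r w x) (psi D r w y) || ca w C (psi D r w y) (psi D r w x).
Proof.
case/orP.
  case: x => [|[C1 a] t] //; case: y => [|[C2 b] t2] //.
  case/and4P=> /eqP e1 /eqP e2 /eqP et Aab; subst C1 C2 t2.
  have [/andP[/nilP et /eqP eCD]|hn] := boolP (nilp t && (C == D)).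
    subst t C; rewrite /= !eqxx /=.
    have [eaw|naw] := eqVneq a w; have [ebw|nbw] := eqVneq b w.
    - by subst; rewrite A_irr in Aab.
    - by subst; rewrite /ca /= !eqxx Aab ?orbT.
    - by subst; rewrite /ca /= !eqxx A_sym Aab ?orbT.
    - by rewrite /ca /= !eqxx Aab.
  by rewrite !psi_consE // /ca !eqxx Aab.
case: y => [|[C2 b] t2] // /and3P[/eqP e2 /eqP et Ab]; subst C2 t2.
have [/andP[/nilP et /eqP eCD]|hn] := boolP (nilp x && (C == D)).
  subst x C; rewrite /= !eqxx /=.
  have [ebw|nbw] := eqVneq b w.
    by subst; rewrite /ca /= !eqxx A_sym Ab ?orbT.
  by rewrite /ca /= !eqxx Ab.
by rewrite psi_consE // /ca /= !eqxx psi_lastv Ab ?orbT.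
Qed.

Section Psi.
Variables (D : 'I_c) (r w : 'I_n).
Hypothesis hD : validstr A r [:: (D, w)].

Lemma hD' : validstr A w [:: (D, r)].
Proof. by move: hD; rewrite !validE /= => /and4P[-> -> ne _]; rewrite eq_sym ne. Qed.

Lemma psi_valid s : validstr A r s -> validstr A w (psi D r w s).
Proof.
elim: s => [|[C a] t IH]; first by move=> _; exact: hD'.
rewrite validE => /and5P[Vt uC aC ne hC].
move: hD; rewrite validE /= => /and4P[uD wD nwr _].
case: t Vt uC ne hC IH => [|[C' a'] t'] Vt uC ne hC IH.
  rewrite /= in uC ne *; have [eCD|nCD] := eqVneq C D.
    subst; have [eaw|naw] := eqVneq a w; first by [].
    by rewrite validE /= wD aC naw.
  by rewrite validE /= (eq_sym r w) nwr wD uD uC aC ne nCD.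
have -> : nilp ((C', a') :: t') = false by [].
rewrite andFb validE IH // psi_lastv uC aC ne.
move: (psi_hd D r w C' a' t'); case: (psi D r w ((C', a') :: t')) => [|[C'' a''] t''] //.
by move/eqP->.
Qed.

Lemma psi_inv s : validstr A r s -> psi D w r (psi D r w s) = s.
Proof.
elim: s => [|[C a] t IH]; first by rewrite /= !eqxx.
rewrite validE => /and5P[Vt uC aC ne hC].
case: t Vt uC ne hC IH => [|[C' a'] t'] Vt uC ne hC IH.
  rewrite /= in uC ne *; have [eCD|nCD] := eqVneq C D.
    subst; have [eaw|naw] := eqVneq a w; first by rewrite /= eaw ?eqxx.
    by rewrite /= eqxx (negbTE ne).
  by rewrite /= !eqxx ?(negbTE nCD).
rewrite psi_cons2.
move: (psi_hd D r w C' a' t') (IH Vt).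
case: (psi D r w ((C', a') :: t')) => [|[C'' a''] t''] //.
  move=> _ /= [eD ew et]; case: eqP => [eCD|_]; last by rewrite eD ew et.
  by move: hC; rewrite eCD eD eqxx.
by move=> /eqP eC'' <-.
Qed.

Lemma psi_adj_fwd C x y : adjC A r C x y -> adjC A w C (psi D r w x) (psi D r w y).
Proof.
rewrite !adjCE => /and3P[Vx Vy H]; rewrite !psi_valid //=.
case/orP: H => H; first exact: psi_ca.
by rewrite orbC; apply: psi_ca.
Qed.

End Psi.

Lemma psi_adjC D r w C x y : validstr A r [:: (D, w)] ->
  validstr A r x -> validstr A r y ->
  adjC A w C (psi D r w x) (psi D r w y) = adjC A r C x y.
Proof.
move=> hD Vx Vy; apply/idP/idP; last exact: psi_adj_fwd.
move/(psi_adj_fwd (hD' hD)); rewrite !psi_inv //.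
Qed.


Fixpoint Fw (rho : 'I_n) (a s : str) : str :=
  match a with [::] => s | (D, w) :: t => psi D (lastv rho t) w (Fw rho t s) end.
Fixpoint Bw (rho : 'I_n) (a s : str) : str :=
  match a with [::] => s | (D, w) :: t => Bw rho t (psi D w (lastv rho t) s) end.

Lemma step_valid rho D w t : validstr A rho ((D, w) :: t) ->
  validstr A (lastv rho t) [:: (D, w)] /\ validstr A rho t.
Proof. by rewrite validE => /and5P[Vt hu hw ne _]; split => //; rewrite validE /= hu hw ne. Qed.

Lemma Fw_app rho a s : Fw rho a (s ++ a) = s.
Proof.
elim: a s => [|[D w] t IH] s /=; first by rewrite cats0.
by rewrite -cat_rcons IH -cats1 psi_app.
Qed.

Lemma Fw_lastv rho a s : lastv (lastv rho a) (Fw rho a s) = lastv rho s.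
Proof. by elim: a => [|[D w] t IH] //=; rewrite psi_lastv IH. Qed.

Lemma Fw_valid rho a s : validstr A rho a -> validstr A rho s ->
  validstr A (lastv rho a) (Fw rho a s).
Proof.
elim: a => [|[D w] t IH] // /step_valid[hD Vt] Vs /=.
exact: psi_valid hD _ (IH Vt Vs).
Qed.

Lemma Bw_valid rho a s : validstr A rho a -> validstr A (lastv rho a) s ->
  validstr A rho (Bw rho a s).
Proof.
elim: a s => [|[D w] t IH] s // /step_valid[hD Vt] Vs /=.
exact: IH Vt (psi_valid (hD' hD) Vs).
Qed.

Lemma BwFw rho a s : validstr A rho a -> validstr A rho s -> Bw rho a (Fw rho a s) = s.
Proof.
elim: a => [|[D w] t IH] // /step_valid[hD Vt] Vs /=.
by rewrite psi_inv ?IH // Fw_valid.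
Qed.

Lemma FwBw rho a s : validstr A rho a -> validstr A (lastv rho a) s -> Fw rho a (Bw rho a s) = s.
Proof.
elim: a s => [|[D w] t IH] s // /step_valid[hD Vt] Vs /=.
have Vs' : validstr A (lastv rho t) (psi D w (lastv rho t) s).
  by apply: psi_valid; [exact: hD' | exact: Vs].
rewrite IH //; by apply: psi_inv => //; apply: hD'.
Qed.

Lemma Fw_adj rho a C x y : validstr A rho a -> validstr A rho x -> validstr A rho y ->
  adjC A (lastv rho a) C (Fw rho a x) (Fw rho a y) = adjC A rho C x y.
Proof.
elim: a => [|[D w] t IH] // /step_valid[hD Vt] Vx Vy /=.
by rewrite psi_adjC ?IH // Fw_valid.
Qed.

Lemma adjX_valid rho x y : adjX A rho x y -> validstr A rho x && validstr A rho y.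
Proof. by case/existsP=> C; rewrite adjCE => /and3P[-> -> _]. Qed.

Lemma adjX_sym rho x y : adjX A rho x y = adjX A rho y x.
Proof.
by apply/existsP/existsP=> -[C]; exists C; move: p; rewrite !adjCE andbCA orbC.
Qed.

Lemma adjX_cand rho r z : adjX A rho r z -> z \in candidates r.
Proof.
case/existsP=> C; rewrite adjCE => /and3P[_ _ /orP[] /orP[]].
- case: r => [|[C1 a] t] //; case: z => [|[C2 b] t2] // /and4P[/eqP e1 /eqP e2 /eqP et _].
  subst; rewrite /candidates mem_cat; apply/orP; right.
  by rewrite inE; apply/orP; right; apply/mapP; exists b; rewrite ?mem_enum.
- case: z => [|[C2 b] t2] // /and3P[_ /eqP et _]; subst.
  by rewrite /candidates mem_cat; apply/orP; left; apply/mapP; exists (C2, b); rewrite ?mem_enum.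
- case: z => [|[C1 a] t] //; case: r => [|[C2 b] t2] // /and4P[/eqP e1 /eqP e2 /eqP et _].
  subst; rewrite /candidates mem_cat; apply/orP; right.
  by rewrite inE; apply/orP; right; apply/mapP; exists a; rewrite ?mem_enum.
- case: r => [|[C2 b] t2] // /and3P[_ /eqP et _]; subst.
  by rewrite /candidates mem_cat; apply/orP; right; rewrite inE eqxx.
Qed.

Lemma mem_neighbours rho r z : (z \in neighbours A rho r) = adjX A rho r z.
Proof.
by rewrite /neighbours mem_filter andb_idr //; apply: adjX_cand.
Qed.

Lemma mem_ball_step rho S z :
  (z \in ball_step A rho S) = (z \in S) || has (fun r => adjX A rho r z) S.
Proof.
rewrite /ball_step mem_undup mem_cat; congr (_ || _).
apply/flattenP/hasP => [[l /mapP[r rS ->]]|[r rS H]].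
  by rewrite mem_neighbours => H; exists r.
by exists (neighbours A rho r); [apply/mapP; exists r | rewrite mem_neighbours].
Qed.

Lemma ball_uniq rho k x y : uniq (ball A rho k x y).
Proof. by rewrite /ball; case: k => [|k]; rewrite ?iterS /ball_step; exact: undup_uniq. Qed.

Lemma ball_valid rho k x y : validstr A rho x -> validstr A rho y ->
  all (validstr A rho) (ball A rho k x y).
Proof.
move=> Vx Vy; elim: k => [|k IH]; first by rewrite /ball /=; case: ifP; rewrite /= ?Vx ?Vy.
apply/allP=> z; rewrite /ball iterS mem_ball_step => /orP[zB|/hasP[r _ /adjX_valid/andP[]//]].
exact: (allP IH).
Qed.

Lemma mem_ball0 rho x y z : (z \in ball A rho 0 x y) = (z == x) || (z == y).
Proof. rewrite /ball /=; case: ifP; rewrite !inE // => /eqP->; by case: (z == y). Qed.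

Section Iso.
Variables (rho : 'I_n) (f g : str -> str).
Local Notation V := (validstr A rho).
Hypotheses (fV : forall s, V s -> V (f s)) (gV : forall s, V s -> V (g s))
  (gf : forall s, V s -> g (f s) = s) (fg : forall s, V s -> f (g s) = s)
  (fadj : forall x y, V x -> V y -> adjX A rho (f x) (f y) = adjX A rho x y).

Lemma ball_map k x y x' y' : V x -> V y ->
  (x' = f x /\ y' = f y) \/ (x' = f y /\ y' = f x) ->
  ball A rho k x' y' =i map f (ball A rho k x y).
Proof.
move=> Vx Vy Hxy; elim: k => [|k IH] z.
  rewrite mem_ball0; apply/idP/mapP.
    by case: Hxy => -[-> ->] /orP[]/eqP->; [exists x|exists y|exists y|exists x];
      rewrite // mem_ball0 eqxx ?orbT.
  by case=> w; rewrite mem_ball0 => /orP[]/eqP-> ->; case: Hxy => -[-> ->];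
    rewrite eqxx ?orbT.
have BV := ball_valid k Vx Vy.
rewrite /ball iterS mem_ball_step -/(ball A rho k x' y') IH.
apply/idP/mapP.
  case/orP.
    case/mapP=> w wB ->; exists w => //.
    by rewrite /ball iterS mem_ball_step -/(ball A rho k x y) wB.
  case/hasP=> r; rewrite IH => /mapP[r0 r0B ->] Hadj.
  have /andP[_ Vz] := adjX_valid Hadj.
  exists (g z); last by rewrite fg.
  rewrite /ball iterS mem_ball_step -/(ball A rho k x y); apply/orP; right.
  apply/hasP; exists r0 => //; rewrite -fadj ?fg ?gV //.
  exact: (allP BV).
case=> w; rewrite /ball iterS mem_ball_step -/(ball A rho k x y) => /orP[wB ->|].
  by rewrite map_f.
case/hasP=> r0 r0B Hadj ->; apply/orP; right; apply/hasP; exists (f r0).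
  by rewrite IH map_f.
have /andP[V0 Vw] := adjX_valid Hadj.
by rewrite fadj.
Qed.

End Iso.

Lemma adjC_sym rho C x y : adjC A rho C x y = adjC A rho C y x.
Proof. by rewrite !adjCE andbCA orbC. Qed.

Lemma adjC_valid rho C x y : adjC A rho C x y -> validstr A rho x && validstr A rho y.
Proof. by rewrite adjCE => /and3P[-> -> _]. Qed.

Lemma root_nb u C z : adjC A u C [::] z -> z = [:: (C, lastv u z)].
Proof.
rewrite adjCE => /and3P[_ _ /orP[]]; rewrite /ca /=.
  by case: z => [|[C2 b] t2] // /and3P[/eqP -> /eqP -> _].
by case: z => [|[C2 b] t2] //; rewrite orbF.
Qed.

Lemma Fw_self rho a : Fw rho a a = [::].
Proof. exact: (Fw_app rho a [::]). Qed.

Lemma edge_iso rho C u v a b a' b' :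
  adjC A rho C a b -> adjC A rho C a' b' -> lastv rho a = u -> lastv rho a' = u ->
  lastv rho b = v -> lastv rho b' = v ->
  exists f g : str -> str,
  [/\ (forall s, validstr A rho s -> validstr A rho (f s)),
      (forall s, validstr A rho s -> validstr A rho (g s)),
      (forall s, validstr A rho s -> g (f s) = s),
      (forall s, validstr A rho s -> f (g s) = s) &
      (forall C x y, validstr A rho x -> validstr A rho y ->
         adjC A rho C (f x) (f y) = adjC A rho C x y)] /\
      (f a = a' /\ f b = b').
Proof.
move=> Hab Hab' la la' lb lb'.
have /andP[Va Vb] := adjC_valid Hab; have /andP[Va' Vb'] := adjC_valid Hab'.
have ea : lastv rho a' = lastv rho a by rewrite la la'.
exists (fun s => Bw rho a' (Fw rho a s)), (fun s => Bw rho a (Fw rho a' s)).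
have fV : forall s, validstr A rho s -> validstr A rho (Bw rho a' (Fw rho a s)).
  by move=> s Vs; apply: Bw_valid => //; rewrite ea; apply: Fw_valid.
have gV : forall s, validstr A rho s -> validstr A rho (Bw rho a (Fw rho a' s)).
  by move=> s Vs; apply: Bw_valid => //; rewrite -ea; apply: Fw_valid.
have nb : forall a b, adjC A rho C a b -> lastv rho b = v -> Fw rho a b = [:: (C, v)].
  move=> a0 b0 H0 l0; have /andP[V0 W0] := adjC_valid H0.
  have := Fw_adj C V0 V0 W0; rewrite H0 Fw_self => /root_nb ->.
  by rewrite Fw_lastv l0.
split; first split => //.
- move=> s Vs /=; rewrite FwBw ?BwFw //; last by rewrite ea; apply: Fw_valid.
- move=> s Vs /=; rewrite FwBw ?BwFw //; last by rewrite -ea; apply: Fw_valid.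
- move=> C0 x y Vx Vy /=.
  rewrite -(Fw_adj C0 Va' (fV _ Vx) (fV _ Vy)) !FwBw ?ea ?Fw_adj //; by apply: Fw_valid.
split.
  by rewrite Fw_self -(Fw_self rho a') BwFw.
by rewrite (nb _ _ Hab lb) -(nb _ _ Hab' lb') BwFw.
Qed.

Lemma typed_lastv (rho : 'I_n) (C : 'I_c) (u v : 'I_n) (x y : str) : typed rho C u v x y ->
  (lastv rho x == u) && (lastv rho y == v).
Proof.
case/or3P.
- by case/andP=> /eqP -> /eqP -> /=; rewrite !eqxx.
- by case/existsP=> C' /and3P[_ /eqP ex /eqP ->]; rewrite /= ex /= !eqxx.
- by case/and3P=> /eqP -> /eqP -> /eqP -> /=; rewrite !eqxx.
Qed.

Lemma has_type_info rho C u v x y : has_type A rho C u v x y ->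
  adjC A rho C x y /\
  ((lastv rho x = u /\ lastv rho y = v) \/ (lastv rho x = v /\ lastv rho y = u)).
Proof.
move=> H; split.
  by apply/existsP; exists u; apply/existsP; exists v.
case/orP: H => /and4P[_ _ _ /orP[]] /typed_lastv /andP[/eqP -> /eqP ->]; by [left|right].
Qed.

Lemma iso_nbhd rho k (f g : str -> str) x y x' y' :
  (forall s, validstr A rho s -> validstr A rho (f s)) ->
  (forall s, validstr A rho s -> validstr A rho (g s)) ->
  (forall s, validstr A rho s -> g (f s) = s) ->
  (forall s, validstr A rho s -> f (g s) = s) ->
  (forall C x y, validstr A rho x -> validstr A rho y ->
         adjC A rho C (f x) (f y) = adjC A rho C x y) ->
  validstr A rho x -> validstr A rho y ->
  (f x = x' /\ f y = y') \/ (f x = y' /\ f y = x') ->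
  nbhd_iso A rho (ball A rho k x y) (ball A rho k x' y') x y x' y'.
Proof.
move=> fV gV gf fg fadj Vx Vy Hxy.
have BV := ball_valid k Vx Vy.
have finj : {in ball A rho k x y &, injective f}.
  move=> s1 s2 s1B s2B e; rewrite -(gf _ (allP BV _ s1B)) -(gf _ (allP BV _ s2B)) e //.
have fadjX : forall x y, validstr A rho x -> validstr A rho y ->
    adjX A rho (f x) (f y) = adjX A rho x y.
  by move=> x1 y1 V1 W1; apply: eq_existsb => C0; apply: fadj.
exists f; split => //.
- apply: uniq_perm; first by rewrite map_inj_in_uniq // ball_uniq.
    exact: ball_uniq.
  have H' : (x' = f x /\ y' = f y) \/ (x' = f y /\ y' = f x).
    by case: Hxy => -[<- <-]; [left|right].
  by move=> z; rewrite (ball_map gV fg fadjX k Vx Vy H').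
- by move=> s1 s2 s1B s2B C0; apply: fadj; apply: (allP BV).
Qed.

Lemma graph_main rho k C u v x y x' y' :
  has_type A rho C u v x y -> has_type A rho C u v x' y' ->
  nbhd_iso A rho (ball A rho k x y) (ball A rho k x' y') x y x' y'.
Proof.
move=> /has_type_info[Hxy Lxy] /has_type_info[Hxy' Lxy'].
have /andP[Vx Vy] := adjC_valid Hxy.
have Hyx : adjC A rho C y x by rewrite adjC_sym.
have Hyx' : adjC A rho C y' x' by rewrite adjC_sym.
case: Lxy => -[lx ly]; case: Lxy' => -[lx' ly'].
- have [f [g [[fV gV gf fg fadj] [fa fb]]]] := edge_iso Hxy Hxy' lx lx' ly ly'.
  by apply: (iso_nbhd _ fV gV gf fg fadj) => //; left.
- have [f [g [[fV gV gf fg fadj] [fa fb]]]] := edge_iso Hxy Hyx' lx ly' ly lx'.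
  by apply: (iso_nbhd _ fV gV gf fg fadj) => //; right.
- have [f [g [[fV gV gf fg fadj] [fa fb]]]] := edge_iso Hyx Hxy' ly lx' lx ly'.
  by apply: (iso_nbhd _ fV gV gf fg fadj) => //; right.
- have [f [g [[fV gV gf fg fadj] [fa fb]]]] := edge_iso Hyx Hyx' ly ly' lx lx'.
  by apply: (iso_nbhd _ fV gV gf fg fadj) => //; left.
Qed.

Lemma ball_ends rho k x y : (x \in ball A rho k x y) && (y \in ball A rho k x y).
Proof.
elim: k => [|k /andP[IHx IHy]]; first by rewrite !mem_ball0 !eqxx orbT.
by rewrite /ball iterS !mem_ball_step -/(ball A rho k x y) IHx IHy.
Qed.

End G.

Local Open Scope ring_scope.

Lemma sum_lt_sym (R : pzRingType) N (G : 'I_N -> 'I_N -> R) :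
  (forall i k, G i k = G k i) ->
  (\sum_(i < N) \sum_(k < N | (i < k)%N) G i k) *+ 2 = \sum_(i < N) \sum_(k < N) G i k - \sum_(i < N) G i i.
Proof.
move=> Gs.
have sp : forall i : 'I_N, \sum_(k < N) G i k =
    \sum_(k < N | (i < k)%N) G i k + \sum_(k < N) (if (k < i)%N then G i k else 0) + G i i.
  move=> i; rewrite [LHS](bigID (fun k : 'I_N => (i < k)%N)) /= -addrA; congr (_ + _).
  rewrite [in RHS]big_mkcond /= (bigD1 i) ?ltnn //= addrC [in LHS]big_mkcond /=.
  congr (_ + _); apply: eq_bigr => k _.
  case: (ltngtP i k) => h /=.
  - by [].
  - have -> : (k != i) by rewrite -val_eqE neq_ltn h.
    by [].
  - have ek : k = i by apply: val_inj.
    by rewrite ek eqxx.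
rewrite (eq_bigr _ (fun i _ => sp i)) !big_split /= addrK mulr2n; congr (_ + _).
rewrite exchange_big /=; apply: eq_bigr => i _; rewrite big_mkcond /=.
by apply: eq_bigr => k _; rewrite Gs.
Qed.

Lemma sum_lt_perm (R : numDomainType) N (G : 'I_N -> 'I_N -> R) (s : {perm 'I_N}) :
  (forall i k, G i k = G k i) ->
  \sum_(i < N) \sum_(k < N | (i < k)%N) G (s i) (s k) =
  \sum_(i < N) \sum_(k < N | (i < k)%N) G i k.
Proof.
move=> Gs; apply: (@pmulrnI _ 2) => //=.
rewrite sum_lt_sym; last by move=> i k; rewrite Gs.
rewrite sum_lt_sym //.
congr (_ - _).
  rewrite [RHS](reindex_inj (@perm_inj _ s)); apply: eq_bigr => i _.
  by rewrite [RHS](reindex_inj (@perm_inj _ s)).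
by rewrite [RHS](reindex_inj (@perm_inj _ s)).
Qed.

Lemma bitE N (z : {ffun 'I_N -> bool}) (i : 'I_N) : bit z i = z i.
Proof.
apply/existsP/idP => [[j /andP[/eqP e zj]]|zi]; last by exists i; rewrite eqxx.
by have <- : j = i by apply: val_inj.
Qed.

Section QPerm.
Variables (R : realType) (c p N : nat) (E E' : 'I_c -> 'I_N -> 'I_N -> bool).
Variables (gamma : 'I_p -> 'I_c -> R) (beta : 'I_p -> R) (s : {perm 'I_N}).
Hypothesis E's : forall C i k, E' C i k = E' C k i.
Hypothesis hEE : forall C i k, E' C (s i) (s k) = E C i k.

Definition zt (z : {ffun 'I_N -> bool}) : {ffun 'I_N -> bool} := [ffun i => z (s i)].

Lemma zt_inj : injective zt.
Proof.
move=> z1 z2 e; apply/ffunP => i; have := congr1 (fun f : {ffun 'I_N -> bool} => f (s^-1%g i)) e.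
by rewrite !ffunE permKV.
Qed.

Lemma costval_perm j z : costval E' gamma j z = costval E gamma j (zt z).
Proof.
rewrite /costval; congr (- _); apply: eq_bigr => C _.
rewrite -(@sum_lt_perm _ _ (fun i k => (E' C i k)%:R * gamma j C * spin R (z i) * spin R (z k)) s).
  by apply: eq_bigr => i _; apply: eq_bigr => k _; rewrite !ffunE hEE.
by move=> i k; rewrite E's [RHS]mulrAC.
Qed.

Lemma state_perm z : qaoa_state E' gamma beta z = qaoa_state E gamma beta (zt z).
Proof.
rewrite /qaoa_state.
have gen : forall l (ps ps' : state R N), (forall z, ps z = ps' (zt z)) -> forall z,
  foldl (fun psi j => mixer_op beta j (phase_op E' gamma j psi)) ps l z =
  foldl (fun psi j => mixer_op beta j (phase_op E gamma j psi)) ps' l (zt z).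
  elim => //= j l IH ps ps' H; apply: IH => z0.
  rewrite !ffunE [RHS](reindex_inj zt_inj); apply: eq_bigr => y _.
  rewrite !ffunE costval_perm H; congr (_ * _).
  rewrite [LHS](reindex_inj (@perm_inj _ s)); apply: eq_bigr => i _.
  by rewrite !ffunE.
by apply: gen => z0; rewrite !ffunE.
Qed.

Lemma ZZ_perm (i k : 'I_N) :
  ZZ_expect E gamma beta i k = ZZ_expect E' gamma beta (s i) (s k).
Proof.
rewrite /ZZ_expect [LHS](reindex_inj zt_inj); apply: eq_bigr => z _.
by rewrite state_perm !bitE !ffunE.
Qed.

End QPerm.

Lemma ZZ_sym (R : realType) c p N (E : 'I_c -> 'I_N -> 'I_N -> bool) gamma beta i k :
  ZZ_expect (R:=R) (p:=p) E gamma beta i k = ZZ_expect E gamma beta k i.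
Proof. by apply: eq_bigr => z _; rewrite mulrAC. Qed.

Lemma ZZ_perm2 (R : realType) c p N N' (E : 'I_c -> 'I_N -> 'I_N -> bool)
  (E' : 'I_c -> 'I_N' -> 'I_N' -> bool) (gamma : 'I_p -> 'I_c -> R) beta
  (sg : 'I_N -> 'I_N') :
  N = N' -> injective sg -> (forall C i k, E' C i k = E' C k i) ->
  (forall C i k, E' C (sg i) (sg k) = E C i k) ->
  forall i k : 'I_N, ZZ_expect E gamma beta i k = ZZ_expect E' gamma beta (sg i) (sg k).
Proof.
move=> eN; subst N' => inj Es Hs i k.
rewrite -!(permE inj); apply: ZZ_perm => // C i0 k0.
by rewrite !permE.
Qed.

Lemma ZZ_lists (R : realType) c p (T : eqType) (d : T) (adj : 'I_c -> T -> T -> bool)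
  (gamma : 'I_p -> 'I_c -> R) beta (B B' : seq T) (f : T -> T) x y x' y' :
  uniq B -> uniq B' -> {in B &, injective f} -> perm_eq (map f B) B' ->
  {in B &, forall a b, forall C, adj C (f a) (f b) = adj C a b} ->
  (forall C a b, adj C a b = adj C b a) ->
  x \in B -> y \in B -> (f x = x' /\ f y = y') \/ (f x = y' /\ f y = x') ->
  ZZ_expect (fun C (i k : 'I_(size B)) => adj C (nth d B i) (nth d B k))
     gamma beta (index x B) (index y B) =
  ZZ_expect (fun C (i k : 'I_(size B')) => adj C (nth d B' i) (nth d B' k))
     gamma beta (index x' B') (index y' B').
Proof.
move=> uB uB' finj pe fadj adjs xB yB Hxy.
have eN : size B = size B' by rewrite -(perm_size pe) size_map.
have hs : forall i : 'I_(size B), (index (f (nth d B i)) B' < size B')%N.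
  by move=> i; rewrite index_mem -(perm_mem pe) map_f // mem_nth.
pose sg := fun i => Ordinal (hs i).
have sgE : forall i, nth d B' (sg i) = f (nth d B i).
  by move=> i; rewrite /= nth_index // -(perm_mem pe) map_f // mem_nth.
have sginj : injective sg.
  move=> i j e; have := congr1 (fun o : 'I_(size B') => nth d B' o) e.
  rewrite !sgE => /finj; rewrite !mem_nth // => /(_ isT isT) /eqP.
  by rewrite nth_uniq // => /eqP /val_inj.
have hx : (index x B < size B)%N by rewrite index_mem.
have hy : (index y B < size B)%N by rewrite index_mem.
have -> : index x B = Ordinal hx by [].
have -> : index y B = Ordinal hy by [].
rewrite (@ZZ_perm2 _ _ _ _ _ _ (fun C (i k : 'I_(size B')) => adj C (nth d B' i) (nth d B' k)) _ _ sg eN sginj).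
- have ex : (sg (Ordinal hx) : nat) = index (f x) B' by rewrite /= nth_index.
  have ey : (sg (Ordinal hy) : nat) = index (f y) B' by rewrite /= nth_index.
  rewrite ex ey; case: Hxy => -[-> ->] //; exact: ZZ_sym.
- by move=> C i k; rewrite adjs.
- by move=> C i k; rewrite !sgE fadj // mem_nth.
Qed.

Theorem mainTheorem1 (R : realType) (n c : nat) (A : 'I_c -> rel 'I_n) (v1 : 'I_n)
  (c_gt0 : (0 < c)%N)
  (A_sym : forall C : 'I_c, symmetric (A C))
  (A_irr : forall C : 'I_c, irreflexive (A C))
  (A_nonempty : forall C : 'I_c, exists u v : 'I_n, A C u v)
  (A_conn : forall (C : 'I_c) (u w : 'I_n),
      in_under A C u -> in_under A C w -> connect (A C) u w)
  (U_conn : forall u w : 'I_n,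
      connect (fun a b => [exists C : 'I_c, A C a b]) u w)
  (p : nat) (p_gt0 : (0 < p)%N)
  (gamma : 'I_p -> 'I_c -> R) (beta : 'I_p -> R)
  (gamma_rng : forall j C, 0 <= gamma j C <= 2 * pi)
  (beta_rng : forall j, 0 <= beta j <= 2 * pi)
  (C : 'I_c) (u v : 'I_n) (uv_edge : A C u v) :
  forall x y x' y' : str n c,
    has_type A v1 C u v x y -> has_type A v1 C u v x' y' ->
    X_ZZ A v1 gamma beta x y = X_ZZ A v1 gamma beta x' y' /\
    nbhd_iso A v1 (ball A v1 p x y) (ball A v1 p x' y') x y x' y'.
Proof.
move=> x y x' y' H H'.
have Hiso := graph_main A_sym A_irr p H H'.
split; last exact: Hiso.
case: Hiso => f [finj pe fadj Hxy].
have /andP[xB yB] := ball_ends A v1 p x y.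
rewrite /X_ZZ /=.
apply: (@ZZ_lists _ _ _ _ [::] (adjC A v1) gamma beta _ _ f) => //; try exact: ball_uniq.
by move=> C0 a b; apply: adjC_sym.
Qed.
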